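(* Let $r\geq 5$ be an integer, let $q$ be a primitive $r$-th root of unity and $\beta=2+q+q^{-1}$. Consider the homomorphism from the braid group $B_n$ (generators $g_1,\dots,g_{n-1}$) to the Temperley–Lieb algebra $A_{\beta,n}$ given by $g_i\mapsto (1+q)e_i-1$. (1) If $r\neq 6,10$, then the image of $B_3$ in the $2$-dimensional irreducible representation $M_2(\mathbb C)$ of $A_{\beta,3}$ (composition $B_3\to A_{\beta,3}\to M_2(\mathbb C)$) is infinite. (2) If $r=10$, then the image of $B_4$ in the $3$-dimensional irreducible representation $M_3(\mathbb C)$ of $A_{\beta,4}$ is infinite.
   Context: The Temperley–Lieb algebra $A_{\beta,n}$ is the complex algebra generated by $1,e_1,\dots,e_{n-1}$ with relations $e_ie_{i\pm1}e_i=\beta^{-1}e_i$, $e_ie_j=e_je_i$ for $|i-j|>1$, $e_i^2=e_i$. It is a quotient of the Hecke algebra $H_n(q)$ (generators $g_i$ with braid relations and $g_i^2=(q-1)g_i+q$) via $g_i\mapsto (1+q)e_i-1$. For $\beta\neq 1$, $A_{\beta,3}\cong M_2(\mathbb C)\oplus\mathbb C$, and for $\beta\neq 1,2$, $A_{\beta,4}\cong M_3(\mathbb C)\oplus M_2(\mathbb C)\oplus\mathbb C$ (semisimple); $M_2(\mathbb C)$, resp. $M_3(\mathbb C)$, denotes the corresponding simple factor, i.e. the unique irreducible representation of that dimension. The braid group $B_n$ has generators $g_1,\dots,g_{n-1}$ with $g_ig_{i+1}g_i=g_{i+1}g_ig_{i+1}$ and $g_ig_j=g_jg_i$ for $|i-j|>1$.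 *)

(* Defs.v *)
(* Complex numbers are modelled by algC (algebraically closed
   field of characteristic 0, the algebraic complex numbers). *)
From mathcomp Require Import all_boot all_algebra all_field.
Set Implicit Arguments. Unset Strict Implicit. Unset Printing Implicit Defensive.
Import GRing.Theory.
Local Open Scope ring_scope.

(* A d-dimensional (unital) representation of the Temperley-Lieb algebra
   A_{beta,n}: the images E i (i : 'I_n.-1, standing for e_{i+1}) of the
   generators e_1..e_{n-1} in 'M_d satisfy the defining relations
   (1 is sent to the identity matrix). *)
Definition TL_rep (F : fieldType) (beta : F) (n d : nat)
    (E : 'I_n.-1 -> 'M[F]_d) : Prop :=
  (forall i, E i *m E i = E i) /\
  (forall i j : 'I_n.-1, (i : nat) = j.+1 \/ (j : nat) = i.+1 ->
     E i *m E j *m E i = beta^-1 *: E i) /\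
  (forall i j : 'I_n.-1, (j.+1 < i)%N \/ (i.+1 < j)%N ->
     E i *m E j = E j *m E i).

Definition irreducible_family (F : fieldType) (I : Type) (d : nat)
    (E : I -> 'M[F]_d) : Prop :=
  (0 < d)%N /\
  forall U : 'M[F]_d, (forall i, (U *m E i <= U)%MS) ->
    \rank U = 0%N \/ \rank U = d.

(* M lies in the group generated by the matrices G i, i.e. M is a product of
   the G i and their inverses (the image of the braid group, which is
   generated by the g_i, under g_i |-> G i). *)
Definition in_generated_group (F : fieldType) (I : Type) (d : nat)
    (G : I -> 'M[F]_d) (M : 'M[F]_d) : Prop :=
  exists w : seq (I * bool),
    M = foldr (fun x N => (if x.2 then G x.1 else invmx (G x.1)) *m N) 1%:M w.

Definition generated_group_infinite (F : fieldType) (I : Type) (d : nat)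
    (G : I -> 'M[F]_d) : Prop :=
  ~ (exists s : seq 'M[F]_d, forall M, in_generated_group G M -> M \in s).

(* Main.v *)
Require Import Defs.
From mathcomp Require Import all_boot all_algebra all_field.
Import GRing.Theory.
Local Open Scope ring_scope.
From mathcomp Require Import all_order lra ring zify.
Import Order.TTheory GRing.Theory Num.Theory.
Set Implicit Arguments. Unset Strict Implicit.

Module Aux.

Lemma gg_foldr_mul (F : fieldType) (I : Type) d (G : I -> 'M[F]_d) w (X : 'M[F]_d) :
  foldr (fun x N => (if x.2 then G x.1 else invmx (G x.1)) *m N) X w =
  foldr (fun x N => (if x.2 then G x.1 else invmx (G x.1)) *m N) 1%:M w *m X.
Proof. elim: w => [|x w IH] /=; first by rewrite mul1mx. by rewrite IH mulmxA. Qed.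

Lemma gg_mul (F : fieldType) (I : Type) d (G : I -> 'M[F]_d) M1 M2 :
  in_generated_group G M1 -> in_generated_group G M2 ->
  in_generated_group G (M1 *m M2).
Proof.
move=> [w1 ->] [w2 ->]; exists (w1 ++ w2).
by rewrite foldr_cat [in RHS]gg_foldr_mul.
Qed.

Lemma gg_pow (F : fieldType) (I : Type) n (G : I -> 'M[F]_n.+1) N k :
  in_generated_group G N -> in_generated_group G (N ^+ k).
Proof.
move=> HN; elim: k => [|k IH]; first by exists [::].
by rewrite exprS; apply: gg_mul.
Qed.

Lemma pow_repeat (F : fieldType) n (N : 'M[F]_n.+1) (s : seq 'M[F]_n.+1) :
  (forall k, N ^+ k \in s) -> exists i j, (i < j)%N /\ N ^+ i = N ^+ j.
Proof.
move=> Hs.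
have : ~~ uniq [seq N ^+ k | k <- iota 0 (size s).+1].
  apply/negP => U; have := uniq_leq_size U.
  rewrite size_map size_iota.
  have H : {subset [seq N ^+ k | k <- iota 0 (size s).+1] <= s}.
    by move=> x /mapP [k _ ->].
  by move=> /(_ s H); rewrite ltnn.
case/(uniqPn 0) => i [j [lij]]; rewrite size_map size_iota => ljs.
rewrite !(nth_map 0) ?size_iota ?(ltn_trans lij) // !nth_iota ?(ltn_trans lij) // !add0n.
by move=> E; exists i, j.
Qed.

Lemma map_mxX n (u : {rmorphism algC -> algC}) (N : 'M[algC]_n.+1) k :
  map_mx u (N ^+ k) = (map_mx u N) ^+ k.
Proof.
elim: k => [|k IH]; first by rewrite !expr0 map_mx1.
by rewrite !exprS map_mxM IH.
Qed.

Lemma eig_bound n (A : 'M[algC]_n.+1) i j a :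
  (i < j)%N -> A ^+ i = A ^+ j -> root (char_poly A) a -> `|a| <= 1.
Proof.
move=> ltij Aij; rewrite -eigenvalue_root_char => /eigenvalueP [v Hv nz].
have Hk k : v *m A ^+ k = a ^+ k *: v.
  elim: k => [|k IH]; first by rewrite expr0 mulmx1 scale1r.
  by rewrite exprSr mulmxA IH -scalemxAl Hv scalerA exprSr.
have : a ^+ i *: v = a ^+ j *: v by rewrite -!Hk Aij.
move/eqP; rewrite -subr_eq0 -scalerBl scaler_eq0 (negbTE nz) orbF subr_eq0.
have [-> | a0] := eqVneq a 0; first by rewrite normr0 ler01.
rewrite -(subnKC (ltnW ltij)) exprD -{1}[a ^+ i]mulr1 => /eqP /mulfI.
move=> /(_ (expf_neq0 i a0)) /(congr1 (fun x => `|x|)).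
rewrite normr1 normrX => /esym /eqP; rewrite pexpr_eq1 ?subn_gt0 // => /eqP ->.
by [].
Qed.

Lemma tr_bound n (A : 'M[algC]_n.+1) i j :
  (i < j)%N -> A ^+ i = A ^+ j -> `|\tr A| <= n.+1%:R.
Proof.
move=> ltij Aij; have [rs Hrs] := closed_field_poly_normal (char_poly A).
rewrite (monicP (char_poly_monic A)) scale1r in Hrs.
have szr : size rs = n.+1.
  by have := size_char_poly A; rewrite Hrs size_prod_XsubC => -[].
have trE : \tr A = \sum_(z <- rs) z.
  apply: oppr_inj; rewrite -(char_poly_trace A) //= Hrs.
  by rewrite -coefPn_prod_XsubC szr.
rewrite trE; apply: le_trans (ler_norm_sum _ _ _) _.
have : \sum_(z <- rs) `|z| <= \sum_(z <- rs) (1 : algC).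
  rewrite big_seq [X in _ <= X]big_seq; apply: ler_sum => z zr.
  by apply: (eig_bound ltij Aij); rewrite Hrs root_prod_XsubC.
have -> : \sum_(z <- rs) (1 : algC) = n.+1%:R.
  by rewrite -szr -sum1_size natr_sum.
by [].
Qed.

Lemma infinite_of_trace n (I : Type) (G : I -> 'M[algC]_n.+1) N
    (u : {rmorphism algC -> algC}) :
  in_generated_group G N -> n.+1%:R < `|u (\tr N)| ->
  generated_group_infinite G.
Proof.
move=> HN Htr [s Hs].
have [i [j [lt Hij]]] := pow_repeat (fun k => Hs _ (gg_pow k HN)).
have Hij' : (map_mx u N) ^+ i = (map_mx u N) ^+ j by rewrite -!map_mxX Hij.
by have := tr_bound lt Hij'; rewrite trace_map_mx (lt_geF Htr).
Qed.


Lemma cancel_RC (F : fieldType) d k (C : 'M[F]_(d, k)) (R : 'M[F]_(k, d))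
  (B : 'M[F]_(k, d)) (B' : 'M[F]_(d, k)) :
  B *m C = 1%:M -> R *m B' = 1%:M -> C *m R *m (C *m R) = C *m R ->
  R *m C = 1%:M.
Proof.
move=> HB HB' e.
have := congr1 (fun M => B *m M *m B') e; rewrite /= !mulmxA HB mul1mx.
by rewrite -!mulmxA HB' mulmx1 => ->.
Qed.

Lemma tr_idem (F : fieldType) d (E : 'M[F]_d) :
  E *m E = E -> \tr E = (\rank E)%:R.
Proof.
move=> EE.
have [B HB] := row_fullP (col_base_full E).
have [B' HB'] := row_freeP (row_base_free E).
have X1 : row_base E *m col_base E = 1%:M.
  by apply: (cancel_RC HB HB'); rewrite mulmx_base.
by rewrite -{1}(mulmx_base E) mxtrace_mulC X1 mxtrace1.
Qed.

Lemma rank_le_TL (F : fieldType) d (E0 E1 : 'M[F]_d) (b : F) :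
  b != 0 -> E0 *m E1 *m E0 = b^-1 *: E0 -> (\rank E0 <= \rank E1)%N.
Proof.
move=> b0 H.
have -> : E0 = (b *: E0) *m E1 *m E0.
  by rewrite -!scalemxAl H scalerA mulfV // scale1r.
exact: leq_trans (mxrankM_maxl _ _) (mxrankM_maxr _ _).
Qed.

Lemma idem_sub (F : fieldType) m d (A : 'M[F]_(m, d)) (E : 'M[F]_d) :
  E *m E = E -> (A <= E)%MS -> A *m E = A.
Proof. by move=> EE /submxP [D ->]; rewrite -mulmxA EE. Qed.

Lemma rank_sum_TL (F : fieldType) d (E0 E1 : 'M[F]_d) (b : F) :
  b != 1 -> E0 *m E0 = E0 -> E1 *m E1 = E1 ->
  E0 *m E1 *m E0 = b^-1 *: E0 -> (\rank E0 + \rank E1 <= d)%N.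
Proof.
move=> b1 EE0 EE1 H.
have C0 : (E0 :&: E1)%MS = 0.
  set C := (E0 :&: E1)%MS.
  have h0 : C *m E0 = C by apply: idem_sub => //; exact: capmxSl.
  have h1 : C *m E1 = C by apply: idem_sub => //; exact: capmxSr.
  have : C = b^-1 *: C by rewrite -{1}h0 -{1}h1 -{1}h0 -[C *m E0 *m E1 *m E0]mulmxA -[C *m E0 *m (E1 *m E0)]mulmxA [E0 *m (E1 *m E0)]mulmxA H -scalemxAr h0.
  move/eqP; rewrite -subr_eq0 -{1}[C]scale1r -scalerBl scaler_eq0 subr_eq0.
  case/orP => [/eqP h|/eqP //].
  by move: b1; rewrite -[b]invrK -h invr1 eqxx.
rewrite -mxrank_sum_cap C0 mxrank0 addn0; exact: rank_leq_col.
Qed.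

Lemma irr_nonzero (F : fieldType) (I : Type) d (E : I -> 'M[F]_d) :
  (1 < d)%N -> irreducible_family E -> (forall i, E i = 0) -> False.
Proof.
move=> d1 [_ H] E0.
case: (H (pid_mx 1)).
- by move=> i; rewrite E0 mulmx0 sub0mx.
- by rewrite rank_pid_mx ?(ltnW d1).
- by rewrite rank_pid_mx ?(ltnW d1) // => e; rewrite -e in d1.
Qed.

Lemma TL_pair_rank (F : fieldType) d (E0 E1 : 'M[F]_d) (b : F) :
  (d <= 3)%N -> b != 0 -> b != 1 -> E0 *m E0 = E0 -> E1 *m E1 = E1 ->
  E0 *m E1 *m E0 = b^-1 *: E0 -> E1 *m E0 *m E1 = b^-1 *: E1 ->
  \rank E0 = \rank E1 /\ (\rank E0 <= 1)%N.
Proof.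
move=> d3 b0 b1 e0 e1 h01 h10.
have l1 := rank_le_TL b0 h01; have l2 := rank_le_TL b0 h10.
have s := rank_sum_TL b1 e0 e1 h01.
have eq : \rank E0 = \rank E1 by apply/eqP; rewrite eqn_leq l1 l2.
split => //; move: s; rewrite -eq => s.
lia.
Qed.

Lemma part1_facts (b : algC) (E : 'I_(3.-1) -> 'M[algC]_2) :
  b != 0 -> b != 1 -> TL_rep b E -> irreducible_family E ->
  let E0 := E ord0 in let E1 := E ord_max in
  [/\ E0 *m E0 = E0, E1 *m E1 = E1, \tr E0 = 1, \tr E1 = 1
    & E0 *m E1 *m E0 = b^-1 *: E0].
Proof.
move=> b0 b1 [Hid [Hrel _]] Hirr E0 E1.
have h01 : E0 *m E1 *m E0 = b^-1 *: E0 by apply: Hrel; right.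
have h10 : E1 *m E0 *m E1 = b^-1 *: E1 by apply: Hrel; left.
have [eqr le1] := TL_pair_rank (isT : (2 <= 3)%N) b0 b1 (Hid _) (Hid _) h01 h10.
have r1 : \rank E0 = 1%N.
  case r0 : (\rank E0) le1 => [|[|//]] // _.
  exfalso; apply: (irr_nonzero (isT : (1 < 2)%N) Hirr) => i.
  have : \rank (E i) == 0%N.
    have [->|->] : i = ord0 \/ i = ord_max.
      by case: i => [[|[|//]] ?]; [left|right]; apply: val_inj.
    - by rewrite -/E0 r0.
    - by rewrite -/E1 -eqr r0.
  by rewrite mxrank_eq0 => /eqP.
split; [exact: Hid | exact: Hid | by rewrite tr_idem ?Hid // r1 | by rewrite tr_idem ?Hid // -eqr r1 | exact: h01].
Qed.

Lemma part2_facts (b : algC) (E : 'I_(4.-1) -> 'M[algC]_3) :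
  b != 0 -> b != 1 -> TL_rep b E -> irreducible_family E ->
  let E0 := E ord0 in let E1 := E (Ordinal (isT : (1 < 4.-1)%N)) in
  let E2 := E ord_max in
  [/\ [/\ E0 *m E0 = E0, E1 *m E1 = E1 & E2 *m E2 = E2],
      [/\ \tr E0 = 1, \tr E1 = 1 & \tr E2 = 1],
      E0 *m E1 *m E0 = b^-1 *: E0, E2 *m E1 *m E2 = b^-1 *: E2
    & E0 *m E2 = 0].
Proof.
move=> b0 b1 [Hid [Hrel Hcom]] Hirr E0 E1 E2.
have h01 : E0 *m E1 *m E0 = b^-1 *: E0 by apply: Hrel; right.
have h10 : E1 *m E0 *m E1 = b^-1 *: E1 by apply: Hrel; left.
have h21 : E2 *m E1 *m E2 = b^-1 *: E2 by apply: Hrel; left.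
have h12 : E1 *m E2 *m E1 = b^-1 *: E1 by apply: Hrel; right.
have c02 : E0 *m E2 = E2 *m E0 by apply: Hcom; right.
have [eqa le1] := TL_pair_rank (isT : (3 <= 3)%N) b0 b1 (Hid _) (Hid _) h01 h10.
have [eqb _] := TL_pair_rank (isT : (3 <= 3)%N) b0 b1 (Hid _) (Hid _) h21 h12.
have r1 : \rank E0 = 1%N.
  case r0 : (\rank E0) le1 => [|[|//]] // _.
  exfalso; apply: (irr_nonzero (isT : (1 < 3)%N) Hirr) => i.
  have : \rank (E i) == 0%N.
    have [->|[->|->]] : i = ord0 \/ i = Ordinal (isT : (1 < 4.-1)%N) \/ i = ord_max.
      by case: i => [[|[|[|//]]] ?]; [left|right;left|right;right]; apply: val_inj.
    - by rewrite -/E0 r0.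
    - by rewrite -/E1 -eqa r0.
    - by rewrite -/E2 eqb -eqa r0.
  by rewrite mxrank_eq0 => /eqP.
have tr0 : \tr E0 = 1 by rewrite tr_idem ?Hid // r1.
have tr1 : \tr E1 = 1 by rewrite tr_idem ?Hid // -eqa r1.
have tr2 : \tr E2 = 1 by rewrite tr_idem ?Hid // eqb -eqa r1.
split; [by split; apply: Hid | by split | exact: h01 | exact: h21 | ].
set P := E0 *m E2.
set U := (P + P *m E1)%MS.
have rP : (\rank P <= 1)%N by apply: leq_trans (mxrankM_maxl _ _) _; rewrite r1.
have rPE : (\rank (P *m E1) <= 1)%N by apply: leq_trans (mxrankM_maxl _ _) rP.
have rU : (\rank U <= 2)%N.
  apply: leq_trans (mxrank_adds_leqif P (P *m E1)).1 _; lia.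
have eP0 : P *m E0 = P by rewrite /P -mulmxA -c02 mulmxA Hid.
have eP2 : P *m E2 = P by rewrite /P -mulmxA Hid.
have eP10 : P *m E1 *m E0 = b^-1 *: P.
  by rewrite /P c02 -!mulmxA [E0 *m (E1 *m E0)]mulmxA h01 -scalemxAr.
have eP11 : P *m E1 *m E1 = P *m E1 by rewrite -mulmxA Hid.
have eP12 : P *m E1 *m E2 = b^-1 *: P.
  by rewrite /P -!mulmxA [E2 *m (E1 *m E2)]mulmxA h21 -scalemxAr.
have stab : forall i, (U *m E i <= U)%MS.
  move=> i; rewrite addsmxMr addsmx_sub.
  have [->|[->|->]] : i = ord0 \/ i = Ordinal (isT : (1 < 4.-1)%N) \/ i = ord_max.
    by case: i => [[|[|[|//]]] ?]; [left|right;left|right;right]; apply: val_inj.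
  - by rewrite -/E0 eP0 eP10 addsmxSl scalemx_sub ?addsmxSl.
  - by rewrite -/E1 eP11 addsmxSr.
  - by rewrite -/E2 eP2 eP12 addsmxSl scalemx_sub ?addsmxSl.
have [_ Hirr'] := Hirr.
case: (Hirr' U stab) => [U0|e]; last by rewrite e in rU.
have /eqP U00 : U == 0 by rewrite -mxrank_eq0 U0.
apply/eqP; rewrite -submx0; apply: submx_trans (addsmxSl P (P *m E1)) _.
by rewrite -/U U00 submx0.
Qed.


Lemma invG d (E : 'M[algC]_d) (q : algC) : q != 0 -> (1 + q) != 0 -> E *m E = E ->
  invmx ((1 + q) *: E - 1%:M) = ((1 + q) / q) *: E - 1%:M.
Proof.
move=> q0 q1 EE.
set A := _ - _; set B := _ - _.
have AB : A *m B = 1%:M.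
  rewrite /A /B mulmxBl !mulmxBr mul1mx mulmx1 -scalemxAl -scalemxAr EE scalerA.
  have -> : (1 + q) * ((1 + q) / q) = (1 + q) + (1 + q) / q by field.
  rewrite [((1 + q) + (1 + q) / q) *: E]scalerDl mulmx1.
  rewrite [(1 + q) *: E + _]addrC addrK opprB addrC subrK.
  by [].
have [uA _] := mulmx1_unit AB.
by rewrite -[B]mul1mx -(mulVmx uA) -mulmxA AB mulmx1.
Qed.

Lemma tr_pair d (E0 E1 : 'M[algC]_d) (b : algC) :
  E0 *m E0 = E0 -> E0 *m E1 *m E0 = b^-1 *: E0 -> \tr E0 = 1 ->
  \tr (E0 *m E1) = b^-1.
Proof.
move=> e0 h t0.
by rewrite -{1}e0 -mulmxA mxtrace_mulC h mxtraceZ t0 mulr1.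
Qed.

Lemma trace1 (q : algC) (E0 E1 : 'M[algC]_2) :
  q != 0 -> 2 + q + q^-1 != 0 -> (1 + q) != 0 ->
  E0 *m E0 = E0 -> E1 *m E1 = E1 -> \tr E0 = 1 -> \tr E1 = 1 ->
  E0 *m E1 *m E0 = (2 + q + q^-1)^-1 *: E0 ->
  \tr (((1 + q) *: E0 - 1%:M) *m invmx ((1 + q) *: E1 - 1%:M)) = 1 - q - q^-1.
Proof.
move=> q0 b0 q1 e0 e1 t0 t1 h.
rewrite invG // mulmxBl !mulmxBr mul1mx mulmx1 -scalemxAl -scalemxAr scalerA.
rewrite !raddfB /= !mxtraceZ (tr_pair e0 h t0) t0 t1 mulmx1 mxtrace1.
field; rewrite q0 /=.
have -> : (2 + q) * q + 1 = q * (2 + q + q^-1) by field.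
by rewrite mulf_neq0.
Qed.

Lemma trace2 (q : algC) (E0 E1 E2 : 'M[algC]_3) :
  q != 0 -> 2 + q + q^-1 != 0 -> (1 + q) != 0 ->
  E0 *m E0 = E0 -> E1 *m E1 = E1 -> E2 *m E2 = E2 ->
  \tr E0 = 1 -> \tr E1 = 1 -> \tr E2 = 1 ->
  E0 *m E1 *m E0 = (2 + q + q^-1)^-1 *: E0 ->
  E2 *m E1 *m E2 = (2 + q + q^-1)^-1 *: E2 -> E0 *m E2 = 0 ->
  \tr (((1 + q) *: E0 - 1%:M) *m (((1 + q) *: E2 - 1%:M) *m
        (invmx ((1 + q) *: E1 - 1%:M) *m 1%:M))) = 2 * q + q^-1 - 2.
Proof.
move=> q0 b0 q1 e0 e1 e2 t0 t1 t2 h0 h2 z02.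
rewrite mulmx1 invG // mulmxA.
have -> : ((1 + q) *: E0 - 1%:M) *m ((1 + q) *: E2 - 1%:M) =
          1%:M - (1 + q) *: E0 - (1 + q) *: E2.
  rewrite mulmxBl !mulmxBr mul1mx mulmx1 -scalemxAl -scalemxAr z02 !scaler0.
  by rewrite mulmx1 sub0r opprB addrCA addrA.
rewrite !mulmxBl mul1mx -!scalemxAl !mulmxBr !mulmx1 -!scalemxAr.
rewrite !raddfB /= !mxtraceZ (tr_pair e0 h0 t0) (tr_pair e2 h2 t2) t0 t1 t2.
rewrite mxtrace1.
field; rewrite q0 /=.
have -> : (2 + q) * q + 1 = q * (2 + q + q^-1) by field.
by rewrite mulf_neq0.
Qed.


Definition ReR (z : algC) : algR := in_algR (algCreal_Re z).
Definition ImR (z : algC) : algR := in_algR (algCreal_Im z).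
Lemma algR_inj : injective algRval. Proof. exact: val_inj. Qed.

Ltac toR h := apply: algR_inj;
  rewrite ?(rmorphD, rmorphB, rmorphN, rmorphM, rmorph1, rmorph_nat, rmorphXn, rmorph0);
  exact: h.

Lemma unit_norm n (z : algC) : (0 < n)%N -> z ^+ n = 1 -> `|z| = 1.
Proof.
move=> n0 zn; apply/eqP; rewrite -(pexpr_eq1 n0 (normr_ge0 z)) -normrX zn normr1.
by [].
Qed.

Lemma conj_unit (z : algC) : `|z| = 1 -> z^* = z^-1.
Proof. by move=> h; rewrite invC_norm h expr1n invr1 mul1r. Qed.

Lemma unit_neq0 (z : algC) : `|z| = 1 -> z != 0.
Proof. by move=> h; apply/eqP => z0; move: h; rewrite z0 normr0 => /eqP; rewrite eq_sym oner_eq0. Qed.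

Lemma Re_unit (z : algC) : `|z| = 1 -> 'Re z = (z + z^-1) / 2.
Proof. by move=> h; rewrite ReE conj_unit. Qed.

Lemma unitM (z y : algC) : `|z| = 1 -> `|y| = 1 -> `|z * y| = 1.
Proof. by move=> a b; rewrite normrM a b mulr1. Qed.
Lemma unitV (z : algC) : `|z| = 1 -> `|z^-1| = 1.
Proof. by move=> a; rewrite normrV ?a ?invr1 // unitfE unit_neq0. Qed.
Lemma unitX (z : algC) k : `|z| = 1 -> `|z ^+ k| = 1.
Proof. by move=> a; rewrite normrX a expr1n. Qed.

Lemma ReR_prod (z y : algC) : `|z| = 1 -> `|y| = 1 ->
  ReR (z * y) + ReR (z / y) = 2 * ReR z * ReR y.
Proof.
move=> hz hy.
have h : 'Re (z * y) + 'Re (z / y) = 2 * 'Re z * 'Re y.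
  have z0 := unit_neq0 hz; have y0 := unit_neq0 hy.
  rewrite !Re_unit ?unitM ?unitV //; field.
  by rewrite z0 y0.
toR h.
Qed.

Lemma ReR_prod2 (z y : algC) : `|z| = 1 -> `|y| = 1 ->
  ReR (z * y) * ReR (z / y) = ReR z ^+ 2 + ReR y ^+ 2 - 1.
Proof.
move=> hz hy.
have h : 'Re (z * y) * 'Re (z / y) = 'Re z ^+ 2 + 'Re y ^+ 2 - 1.
  have z0 := unit_neq0 hz; have y0 := unit_neq0 hy.
  rewrite !Re_unit ?unitM ?unitV //; field.
  by rewrite z0 y0.
toR h.
Qed.

Lemma ReR_sq (z : algC) : `|z| = 1 -> ReR (z ^+ 2) = 2 * ReR z ^+ 2 - 1.
Proof.
move=> hz.
have h : 'Re (z ^+ 2) = 2 * 'Re z ^+ 2 - 1.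
  have z0 := unit_neq0 hz.
  rewrite !Re_unit ?unitX //; field.
  by rewrite z0.
toR h.
Qed.

Lemma ReR_cube (z : algC) : `|z| = 1 -> ReR (z ^+ 3) = 4 * ReR z ^+ 3 - 3 * ReR z.
Proof.
move=> hz.
have h : 'Re (z ^+ 3) = 4 * 'Re z ^+ 3 - 3 * 'Re z.
  have z0 := unit_neq0 hz.
  rewrite !Re_unit ?unitX //; field.
  by rewrite z0.
toR h.
Qed.

Lemma ReR_sqIm (z : algC) : `|z| = 1 -> ReR z ^+ 2 + ImR z ^+ 2 = 1.
Proof.
move=> hz.
have h : 'Re z ^+ 2 + 'Im z ^+ 2 = 1 by rewrite -normC2_Re_Im hz expr1n.
toR h.
Qed.

Lemma ReR_bound (z : algC) : `|z| = 1 -> -1 <= ReR z <= 1.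
Proof. move=> /ReR_sqIm h; apply/andP; split; nra. Qed.

Lemma ReR_lt1 (z : algC) : `|z| = 1 -> z != 1 -> ReR z < 1.
Proof.
move=> hz z1.
have h : 1 - 'Re z = `|z - 1| ^+ 2 / 2.
  have z0 := unit_neq0 hz.
  rewrite normCK rmorphB /= conjC1 conj_unit // Re_unit //; field.
  by rewrite z0.
have : 0 < 1 - 'Re z.
  by rewrite h divr_gt0 // exprn_gt0 // normr_gt0 subr_eq0.
by rewrite subr_gt0.
Qed.

Lemma ReR1 : ReR 1 = 1.
Proof. apply: algR_inj; rewrite rmorph1 /=; exact: (Creal_ReP _ (rpred1 _)). Qed.

Lemma exists_max (T : eqType) (s : seq T) (f : T -> algR) :
  s != [::] -> exists2 x, x \in s & forall y, y \in s -> f y <= f x.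
Proof.
elim: s => [//|x s IH] _.
case: (eqVneq s [::]) => [-> | /IH [m ms mmax]].
  by exists x => [|y]; rewrite ?mem_head // inE => /eqP ->.
case: (leP (f x) (f m)) => h.
- exists m => [|y]; first by rewrite inE ms orbT.
  by rewrite inE => /orP [/eqP -> | /mmax].
- exists x => [|y]; first by rewrite mem_head.
  rewrite inE => /orP [/eqP -> // | /mmax h']; exact: le_trans h' (ltW h).
Qed.

Definition roots n (q : algC) := [seq q ^+ k | k <- iota 0 n].

Lemma roots_mem n (q x : algC) : n.-primitive_root q -> (x \in roots n q) = (x ^+ n == 1).
Proof.
move=> pq; apply/idP/idP.
- by case/mapP => k _ ->; rewrite exprAC (prim_expr_order pq) expr1n.
- move=> /eqP xn; have [i ->] := prim_rootP pq xn.
  by apply/mapP; exists (nat_of_ord i) => //; rewrite mem_iota add0n ltn_ord.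
Qed.

Lemma pow_mem n (z : algC) j : (0 < n)%N -> z ^+ n = 1 ->
  z ^+ j \in roots n z.
Proof.
move=> n0 zn; apply/mapP; exists (j %% n)%N; last by rewrite expr_mod.
by rewrite mem_iota add0n ltn_pmod.
Qed.

Lemma geo0 n (x : algC) : x ^+ n = 1 -> x != 1 -> \sum_(k < n) x ^+ k = 0.
Proof.
move=> xn x1; have := subrX1 x n; rewrite xn subrr => /esym/eqP.
by rewrite mulf_eq0 subr_eq0 (negbTE x1) /= => /eqP.
Qed.

Lemma prim_neq1 n (q : algC) k : n.-primitive_root q -> (0 < k < n)%N -> q ^+ k != 1.
Proof.
move=> pq /andP [k0 kn]; rewrite -(prim_order_dvd pq).
by apply/negP => /(dvdn_leq k0); rewrite leqNgt kn.
Qed.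

Lemma key_coset (U Z A B : algR) : -1/2 < Z -> Z < 1 -> A <= U -> B <= U ->
  U <= Z -> A + B = 2 * U * Z -> A * B = U ^+ 2 + Z ^+ 2 - 1 -> False.
Proof. move=> *; nra. Qed.


Definition Qp (R : pzRingType) (s : R) := (2 * s - 1) * (2 * s + 1) ^+ 2 * (s + 1).

Lemma Qp_val (s : algR) : algRval (Qp s) = Qp (algRval s).
Proof. by rewrite /Qp !(rmorphM, rmorphB, rmorphD, rmorphXn, rmorph1, rmorph_nat). Qed.

Definition Fy (y : algC) := y ^+ 4 + 3 * y ^+ 3 + 5 * y ^+ 2 + 6 * y + 6 + 6 * y^-1
  + 5 * (y ^+ 2)^-1 + 3 * (y ^+ 3)^-1 + (y ^+ 4)^-1.

Lemma QF (y : algC) : y != 0 -> Qp ((y + y^-1) / 2) = Fy y / 2.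
Proof. by move=> y0; rewrite /Qp /Fy; field; rewrite y0. Qed.

Lemma sum_Fy n (q : algC) : (4 < n)%N -> n.-primitive_root q ->
  \sum_(k < n) Fy (q ^+ k) = 6 * n%:R.
Proof.
move=> n4 pq.
have n0 : (0 < n)%N by lia.
have qn := prim_expr_order pq.
have pw j : (q ^+ j) ^+ n = 1 by rewrite exprAC qn expr1n.
have pwV j : ((q ^+ j)^-1) ^+ n = 1 by rewrite exprVn pw invr1.
have ne j : (0 < j < n)%N -> q ^+ j != 1 by move=> h; apply: prim_neq1 pq h.
have neV j : (0 < j < n)%N -> (q ^+ j)^-1 != 1 by move=> h; rewrite invr_eq1 ne.
have e : forall k : 'I_n, Fy (q ^+ k) =
   (q ^+ 4) ^+ k + 3 * (q ^+ 3) ^+ k + 5 * (q ^+ 2) ^+ k + 6 * (q ^+ 1) ^+ k + 6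
   + 6 * ((q ^+ 1)^-1) ^+ k + 5 * ((q ^+ 2)^-1) ^+ k + 3 * ((q ^+ 3)^-1) ^+ k
   + ((q ^+ 4)^-1) ^+ k.
  by move=> k; rewrite /Fy !exprVn expr1 -!exprM ![(_ * k)%N]mulnC !exprM.
rewrite (eq_bigr _ (fun k _ => e k)) !big_split /= -!mulr_sumr.
rewrite !geo0 ?pw ?pwV //; try (apply: ne; lia); try (apply: neV; lia).
rewrite sumr_const card_ord !mulr0 !addr0 !add0r; ring.
Qed.


Lemma extremal n (q : algC) : (4 <= n)%N -> n.-primitive_root q ->
  exists z, [/\ n.-primitive_root z, -1/2 < ReR z, ReR z < 1,
     (forall y, y ^+ n = 1 -> y != 1 -> ReR y <= ReR z) &
     ((7 <= n)%N -> 1/2 < ReR z)].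
Proof.
move=> n4 pq.
have n0 : (0 < n)%N by lia.
have qn := prim_expr_order pq.
have q1 : q != 1 by rewrite -[q]expr1; apply: prim_neq1 pq _; lia.
have unitq k : `|q ^+ k| = 1 by apply: unitX; exact: unit_norm n0 qn.
have pw j : (q ^+ j) ^+ n = 1 by rewrite exprAC qn expr1n.
set s := [seq y <- roots n q | y != 1].
have sne : s != [::].
  apply/eqP => s0; have : q \in s by rewrite mem_filter q1 roots_mem // qn eqxx.
  by rewrite s0.
have [z zs zmax] := exists_max ReR sne.
move: zs; rewrite mem_filter roots_mem // => /andP [z1 /eqP zn].
have hz := unit_norm n0 zn.
have maxP : forall y, y ^+ n = 1 -> y != 1 -> ReR y <= ReR z.
  by move=> y yn y1; apply: zmax; rewrite mem_filter y1 roots_mem // yn eqxx.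
have lt1 := ReR_lt1 hz z1.
have gt : -1/2 < ReR z.
  rewrite ltNge; apply/negP => H.
  have sum0 : \sum_(k < n) ReR (q ^+ k) = 0.
    apply: algR_inj; rewrite rmorph_sum rmorph0 /=.
    by have := congr1 (fun x : algC => 'Re x) (geo0 qn q1); rewrite /= raddf_sum raddf0.
  move: sum0; rewrite -(big_mkord xpredT (fun k => ReR (q ^+ k))) big_ltn //.
  rewrite expr0 ReR1.
  have : \sum_(1 <= i < n) ReR (q ^+ i) <= \sum_(1 <= i < n) (-1/2 : algR).
    apply: ler_sum_nat => i hi; apply: le_trans (maxP _ (pw _) _) H.
    by apply: prim_neq1 pq _.
  rewrite sumr_const_nat -[_ *+ (n - 1)]mulr_natr => hs hsum.
  have : (3 : algR) <= (n - 1)%:R by rewrite (ler_nat _ 3); lia.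
  move=> h3; suff : (0 : algR) < 0 by rewrite ltxx.
  nra.
have pz : n.-primitive_root z.
  have [k zk] := prim_rootP pq zn.
  case: (boolP (q \in roots n z)) => [qin | qnin].
  - case/mapP: qin => j _ qj.
    rewrite zk prim_root_exp_coprime //.
    have : q ^+ 1 == q ^+ (k * j) by rewrite expr1 exprM -zk -qj.
    rewrite (eq_prim_root_expr pq) => /eqP h.
    have kj1 : (1 <= k * j)%N.
      rewrite lt0n; apply/negP => /eqP e0; move: h; rewrite e0 mod0n modn_small //; lia.
    move: h => /eqP; rewrite eq_sym eqn_mod_dvd // => hd.
    rewrite /coprime -dvdn1.
    have <- : (k * j - (k * j - 1) = 1)%N by lia.
    apply: dvdn_sub; first exact: dvdn_mulr (dvdn_gcdl _ _).
    exact: dvdn_trans (dvdn_gcdr _ _) hd.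
  - exfalso.
    set s' := [seq y <- roots n q | y \notin roots n z].
    have s'ne : s' != [::].
      apply/eqP => s0; have : q \in s' by rewrite mem_filter qnin (roots_mem _ pq) qn eqxx.
      by rewrite s0.
    have [u us umax] := exists_max ReR s'ne.
    move: us; rewrite mem_filter (roots_mem _ pq) => /andP [unz /eqP un].
    have hu := unit_norm n0 un.
    have z0 := unit_neq0 hz.
    have u1 : u != 1.
      apply: contraNneq unz => ->; rewrite -(expr0 z); exact: pow_mem.
    have uzin : u * z \in s'.
      rewrite mem_filter (roots_mem _ pq) exprMn un zn mulr1 eqxx andbT.
      apply/negP => /mapP [j _ e]; move/negP: unz; apply.
      have -> : u = z ^+ (j + n.-1)%N.
        by apply: (mulIf z0); rewrite e -exprSr -addnS prednK // exprD zn mulr1.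
      exact: (pow_mem _ n0 zn).
    have uzVin : u / z \in s'.
      rewrite mem_filter (roots_mem _ pq) exprMn exprVn un zn invr1 mulr1 eqxx andbT.
      apply/negP => /mapP [j _ e]; move/negP: unz; apply.
      have -> : u = z ^+ j.+1 by rewrite exprSr -e divfK.
      exact: (pow_mem _ n0 zn).
    have hA := umax _ uzin; have hB := umax _ uzVin.
    have hU := maxP u un u1.
    exact: (key_coset gt lt1 hA hB hU (ReR_prod hu hz) (ReR_prod2 hu hz)).
exists z; split => // n7.
rewrite ltNge; apply/negP => H.
have Pneg : forall k, (0 < k < n)%N -> Qp (ReR (q ^+ k)) <= 0.
  move=> k hk; have h := le_trans (maxP _ (pw k) (prim_neq1 pq hk)) H.
  have /andP [lo _] := ReR_bound (unitq k).
  rewrite /Qp; apply: mulr_le0_ge0; [apply: mulr_le0_ge0; [lra | exact: sqr_ge0] | lra].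
have Psum : \sum_(k < n) Qp (ReR (q ^+ k)) = 3 * n%:R.
  apply: algR_inj; rewrite rmorph_sum rmorphM !rmorph_nat.
  have -> : (3 * n%:R : algC) = (\sum_(k < n) Fy (q ^+ k)) / 2.
    by rewrite sum_Fy; [field | lia | exact: pq].
  rewrite mulr_suml; apply: eq_bigr => k _.
  transitivity (Qp ('Re (q ^+ k))); first exact: Qp_val.
  by rewrite Re_unit // QF // unit_neq0.
move: Psum; rewrite -(big_mkord xpredT (fun k => Qp (ReR (q ^+ k)))) big_ltn //.
rewrite expr0 ReR1.
have : \sum_(1 <= i < n) Qp (ReR (q ^+ i)) <= 0.
  rewrite big_nat; apply: sumr_le0 => i hi; exact: Pneg.
move=> hs hsum.
have : (7 : algR) <= n%:R by rewrite (ler_nat _ 7).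
rewrite /Qp in hsum; move=> h7; suff : (0 : algR) < 0 by rewrite ltxx.
nra.
Qed.


Lemma ReRN (z : algC) : ReR (- z) = - ReR z.
Proof. have h : 'Re (- z) = - 'Re z by rewrite raddfN. toR h. Qed.

Lemma half_neg1 (z : algC) m : (0 < m)%N -> (m * 2).-primitive_root z -> z ^+ m = -1.
Proof.
move=> m0 pz.
have : (z ^+ m) ^+ 2 == 1 by rewrite -exprM (prim_expr_order pz).
rewrite sqrf_eq1 => /orP [e|/eqP //].
by move: e; rewrite (negbTE (prim_neq1 pz _)) //; apply/andP; split => //; lia.
Qed.

Lemma real_odd (X a : algR) : -1/2 < X -> X < 1 -> a <= X -> X = 2 * a ^+ 2 - 1 -> a < -1/2.
Proof. move=> *; nra. Qed.

Lemma target1 r (q : algC) : (5 <= r)%N -> r <> 6%N -> r <> 10%N ->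
  r.-primitive_root q -> exists w, r.-primitive_root w /\ ReR w < -1/2.
Proof.
move=> r5 r6 r10 pq.
have r0 : (0 < r)%N by lia.
case/boolP: (odd r) => ro.
- have r4 : (4 <= r)%N by lia.
  have [z [pz gt lt1 maxP _]] := extremal r4 pq.
  set h := (r.+1 %/ 2)%N.
  have h2 : (h * 2 = r.+1)%N by rewrite /h divnK // dvdn2 /= ro.
  have zr := prim_expr_order pz.
  have hz := unit_norm r0 zr.
  exists (z ^+ h); split.
    rewrite prim_root_exp_coprime // /coprime -dvdn1.
    rewrite -(dvdn_addr 1 (dvdn_gcdr h r)) addn1 -h2.
    exact: dvdn_mulr (dvdn_gcdl _ _).
  have w2 : (z ^+ h) ^+ 2 = z by rewrite -exprM h2 exprS zr mulr1.
  have w1 : z ^+ h != 1.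
    by apply: contraTneq lt1 => e; rewrite -w2 e expr1n ReR1 ltxx.
  have wr : (z ^+ h) ^+ r = 1 by rewrite exprAC zr expr1n.
  have := maxP _ wr w1.
  have := ReR_sq (unitX h hz); rewrite w2 => e le.
  exact: real_odd gt lt1 le e.
- have [m rm] : exists m, r = (m * 2)%N.
    by exists (r %/ 2)%N; rewrite divnK // dvdn2 (negbTE ro).
  have m0 : (0 < m)%N by lia.
  have qm : q ^+ m = -1 by apply: half_neg1 m0 _; rewrite -rm.
  case/boolP: (odd m) => mo.
  + have pq2 : m.-primitive_root (q ^+ 2).
      have := exp_prim_root pq 2.
      have -> : gcdn 2 r = 2%N by rewrite rm gcdnMl.
      by rewrite rm mulnK.
    have m4 : (4 <= m)%N by lia.
    have m7 : (7 <= m)%N.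
      case: (ltnP m 7) => // h; exfalso.
      have : m \in [:: 4; 5; 6]%N by rewrite !inE; lia.
      rewrite !inE => /or3P [] /eqP e; rewrite e /= in mo; try done; lia.
    have [z [pz _ _ _ big]] := extremal m4 pq2.
    have z7 := big m7.
    have [i zi] := prim_rootP pq2 (prim_expr_order pz).
    have ci : coprime i m by rewrite -(prim_root_exp_coprime i pq2) -zi.
    exists (- z); split; last first.
      by rewrite ReRN; lra.
    have -> : - z = q ^+ (m + 2 * i) by rewrite exprD qm exprM -zi mulN1r.
    rewrite prim_root_exp_coprime // rm coprimeMr coprimen2 oddD oddM /= mo /=.
    rewrite -coprime_modl modnDl coprime_modl coprimeMl coprime2n mo.
    by rewrite ci.
  + have r4 : (4 <= r)%N by lia.
    have r7 : (7 <= r)%N.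
      case: (ltnP r 7) => // h; exfalso.
      have : m \in [:: 3]%N by rewrite !inE; lia.
      by rewrite !inE => /eqP e; rewrite e in mo.
    have [z [pz _ _ _ big]] := extremal r4 pq.
    have z7 := big r7.
    exists (- z); split; last first.
      by rewrite ReRN; lra.
    have zm : z ^+ m = -1 by apply: half_neg1 m0 _; rewrite -rm.
    have -> : - z = z ^+ m.+1 by rewrite exprS zm mulrN1.
    rewrite prim_root_exp_coprime // rm coprimeMr coprimen2 /= mo coprimeSn.
    by [].
Qed.


Definition NR (t : algC) : algR := in_algR (normr_real t).

Lemma NR_ge0 t : 0 <= NR t. Proof. exact: (normr_ge0 t). Qed.

Lemma bound1 (w : algC) : `|w| = 1 -> ReR w < -1/2 -> 2 < `|1 - w - w^-1|.
Proof.
move=> hw lt.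
have h : `|1 - w - w^-1| ^+ 2 = (1 - 2 * 'Re w) ^+ 2.
  have w0 := unit_neq0 hw.
  rewrite -(conj_unit hw) normCK !rmorphB /= conjC1 conjCK (conj_unit hw) Re_unit //.
  by field; rewrite w0.
have hR : NR (1 - w - w^-1) ^+ 2 = (1 - 2 * ReR w) ^+ 2 by toR h.
have g := NR_ge0 (1 - w - w^-1).
have : (2 : algR) < NR (1 - w - w^-1) by nra.
by [].
Qed.

Lemma bound2 (w : algC) : `|w| = 1 -> 4 * ReR w ^+ 2 = 2 * ReR w + 1 -> ReR w < 0 ->
  3 < `|2 * w + w^-1 - 2|.
Proof.
move=> hw rel lt.
have h : `|2 * w + w^-1 - 2| ^+ 2 = 5 + 8 * 'Re w ^+ 2 - 12 * 'Re w.
  have w0 := unit_neq0 hw.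
  rewrite -(conj_unit hw) normCK !rmorphB !rmorphD !rmorphM /= !rmorph_nat conjCK.
  rewrite (conj_unit hw) Re_unit //.
  by field; rewrite w0.
have hR : NR (2 * w + w^-1 - 2) ^+ 2 = 5 + 8 * ReR w ^+ 2 - 12 * ReR w by toR h.
have g := NR_ge0 (2 * w + w^-1 - 2).
have xl : ReR w < -1/4 by nra.
have h9 : 9 < NR (2 * w + w^-1 - 2) ^+ 2 by rewrite hR; nra.
have : (3 : algR) < NR (2 * w + w^-1 - 2) by nra.
by [].
Qed.

Lemma phi10 (z : algC) : 10.-primitive_root z -> 4 * ReR z ^+ 2 = 2 * ReR z + 1.
Proof.
move=> pz.
have z5 : z ^+ 5 = -1 by apply: (half_neg1 (m:=5)) pz.
have hz := unit_norm (isT : (0 < 10)%N) (prim_expr_order pz).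
have z0 := unit_neq0 hz.
have z1 : z + 1 != 0.
  rewrite addr_eq0; apply/eqP => e.
  by have := prim_neq1 pz (isT : (0 < 2 < 10)%N); rewrite e sqrrN expr1n eqxx.
have P0 : z ^+ 4 - z ^+ 3 + z ^+ 2 - z + 1 = 0.
  have : (z + 1) * (z ^+ 4 - z ^+ 3 + z ^+ 2 - z + 1) = 0.
    have -> : (z + 1) * (z ^+ 4 - z ^+ 3 + z ^+ 2 - z + 1) = z ^+ 5 + 1 by ring.
    by rewrite z5 addNr.
  by move/eqP; rewrite mulf_eq0 (negbTE z1) /= => /eqP.
have h : 4 * 'Re z ^+ 2 = 2 * 'Re z + 1.
  apply/eqP; rewrite -subr_eq0 Re_unit //.
  have -> : 4 * ((z + z^-1) / 2) ^+ 2 - (2 * ((z + z^-1) / 2) + 1) =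
     (z ^+ 2)^-1 * (z ^+ 4 - z ^+ 3 + z ^+ 2 - z + 1) by field; rewrite z0.
  by rewrite P0 mulr0.
toR h.
Qed.

Lemma real_phi (x : algR) : 4 * x ^+ 2 = 2 * x + 1 -> 0 <= x -> 4 * x ^+ 3 - 3 * x < 0.
Proof. move=> *; nra. Qed.

Lemma target2 (q : algC) : 10.-primitive_root q ->
  exists w, [/\ 10.-primitive_root w, 4 * ReR w ^+ 2 = 2 * ReR w + 1 & ReR w < 0].
Proof.
move=> pq.
have hq := unit_norm (isT : (0 < 10)%N) (prim_expr_order pq).
case: (ltP (ReR q) 0) => h.
  by exists q; split => //; exact: phi10.
exists (q ^+ 3); split.
- by rewrite prim_root_exp_coprime.
- by apply: phi10; rewrite prim_root_exp_coprime.
- by rewrite ReR_cube //; apply: real_phi (phi10 pq) h.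
Qed.

End Aux.
Import Aux.
Unset Implicit Arguments.

Theorem proposition3p3 (r : nat) (q : algC) :
  (5 <= r)%N -> r.-primitive_root q ->
  ((r <> 6%N /\ r <> 10%N) ->
     forall E : 'I_(3.-1) -> 'M[algC]_2,
       TL_rep (2 + q + q^-1) E -> irreducible_family E ->
       generated_group_infinite (fun i => (1 + q) *: E i - 1%:M)) /\
  (r = 10%N ->
     forall E : 'I_(4.-1) -> 'M[algC]_3,
       TL_rep (2 + q + q^-1) E -> irreducible_family E ->
       generated_group_infinite (fun i => (1 + q) *: E i - 1%:M)).
Proof.
move=> r5 pq.
have r0 : (0 < r)%N by lia.
have q0 : q != 0 by rewrite (prim_root_eq0 pq); apply/eqP; lia.
have q2 : q ^+ 2 != 1 by apply: prim_neq1 pq _; apply/andP; split; lia.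
have q3 : q ^+ 3 != 1 by apply: prim_neq1 pq _; apply/andP; split; lia.
have q1 : 1 + q != 0.
  apply: contraNneq q2 => e; have -> : q = -1 by apply: (addrI 1); rewrite e subrr.
  by rewrite sqrrN expr1n.
have b0 : 2 + q + q^-1 != 0.
  have -> : 2 + q + q^-1 = (1 + q) ^+ 2 / q by field.
  by rewrite mulf_neq0 ?invr_eq0 ?expf_neq0.
have b1 : 2 + q + q^-1 != 1.
  apply: contraNneq q3 => e; rewrite -subr_eq0.
  have -> : q ^+ 3 - 1 = (2 + q + q^-1 - 1) * q * (q - 1) by field.
  by rewrite e subrr !mul0r eqxx.
have aut : forall w, r.-primitive_root w -> exists u : {rmorphism algC -> algC}, u q = w.
  move=> w pw; have [i wi] := prim_rootP pq (prim_expr_order pw).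
  have ci : coprime i r by rewrite -(prim_root_exp_coprime i pq) -wi.
  have [u hu] := Qn_aut_exists ci.
  by exists u; rewrite hu ?(prim_expr_order pq) // wi.
split.
- move=> [r6 r10] E HTL Hirr.
  move: (part1_facts b0 b1 HTL Hirr) => /= [e0 e1 t0 t1 h01].
  have [w [pw hw]] := target1 r5 r6 r10 pq.
  have [u uq] := aut w pw.
  apply: (@infinite_of_trace 1 _ _
    (((1 + q) *: E ord0 - 1%:M) *m invmx ((1 + q) *: E ord_max - 1%:M)) u).
    by exists [:: (ord0, true); (ord_max, false)]; rewrite /= mulmx1.
  rewrite trace1 // !rmorphB rmorph1 fmorphV uq.
  apply: bound1 hw; exact: unit_norm r0 (prim_expr_order pw).
- move=> r10 E HTL Hirr; subst r.
  move: (part2_facts b0 b1 HTL Hirr) => /= [[e0 e1 e2] [t0 t1 t2] h0 h2 z02].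
  have [w [pw rel neg]] := target2 pq.
  have [u uq] := aut w pw.
  apply: (@infinite_of_trace 2 _ _
    (((1 + q) *: E ord0 - 1%:M) *m (((1 + q) *: E ord_max - 1%:M) *m
      (invmx ((1 + q) *: E (Ordinal (isT : (1 < 4.-1)%N)) - 1%:M) *m 1%:M))) u).
    by exists [:: (ord0, true); (ord_max, true); (Ordinal (isT : (1 < 4.-1)%N), false)].
  rewrite trace2 // rmorphB rmorphD rmorphM rmorph_nat fmorphV uq.
  apply: bound2 rel neg; exact: unit_norm (isT : (0 < 10)%N) (prim_expr_order pw).
Qed.
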